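(* Let $\Lambda\Subset\mathbb X$, let $Y\Subset\mathbb X$, let $\preceq$ be an arbitrary total order on $Y$ (strict part $\prec$), and suppose that $Z(\Lambda\mid\{y'\in Y\mid y'\prec y\})\neq0$ for all $y\in Y$. Then \[ R(Y,\Lambda)=\prod_{y\in Y}R\big(y,\Lambda\ \big|\ \{y'\in Y\mid y'\prec y\}\big). \]
   Context: $\mathbb X$ is a finite or countably infinite set, $X\Subset\mathbb X$ means finite subset, $\mathbf F$ is the set of finite subsets of $\mathbb X$. Fix $z:\mathbb X\to\mathbb C$, $W:\mathbf F\to\mathbb C$; $z^X=\prod_{y\in X}z(y)$; singletons $\{y\}$ are written $y$ inside arguments. Conditional interaction: $W(X\mid B)=\prod_{C\subset B}W(X\cup C)$ if $X\cap B=\varnothing$, $W(X\mid B)=0$ if $X=\{y\}$ with $y\in B$, and $W(X\mid B)=1$ otherwise. Boltzmann factor $\kappa(X\mid B)=\prod_{\varnothing\neq S\subset X}W(S\mid B)$. Partition functions $Z(X,\Lambda\mid B)=\sum_{Y'\subset\Lambda\setminus X}z^{X\cup Y'}\kappa(X\cup Y'\mid B)$, $Z(\Lambda\mid B)=Z(\varnothing,\Lambda\mid B)$, with $B$ omitted when $B=\varnothing$. Correlations $R(X,\Lambda\mid B)=Z(X,\Lambda\mid B)/Z(\Lambda\mid B)$ when $Z(\Lambda\mid B)\neq0$ (note $X$ need not be a subset of $\Lambda$). *)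

(* Defs.v *)
From HB Require Import structures.
From mathcomp Require Import all_boot all_order all_algebra.
From mathcomp Require Import finmap.
Set Implicit Arguments. Unset Strict Implicit. Unset Printing Implicit Defensive.
Import GRing.Theory.
Local Open Scope ring_scope.
Local Open Scope fset_scope.

(* The ambient set 𝕏 is a countType T; finite subsets X ⋐ 𝕏 are {fset T}.
   Values are in an arbitrary field F (ℂ is an instance). *)
Section Defs.
Variables (T : countType) (F : fieldType).
Variables (z : T -> F) (W : {fset T} -> F).

Definition zpow (X : {fset T}) : F := \prod_(y <- X) z y.

Definition Wcond (X B : {fset T}) : F :=
  if X `&` B == fset0 then \prod_(C <- fpowerset B) W (X `|` C)
  else if [exists y : X, (X == [fset val y]) && (val y \in B)] then 0
  else 1.

Definition kappa (X B : {fset T}) : F :=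
  \prod_(S <- fpowerset X | S != fset0) Wcond S B.

Definition Zpart (X Lam B : {fset T}) : F :=
  \sum_(Y' <- fpowerset (Lam `\` X)) zpow (X `|` Y') * kappa (X `|` Y') B.

(* R(X, Λ | B) = Z(X,Λ|B)/Z(Λ|B) (used only where Z(Λ|B) ≠ 0) *)
Definition Rcorr (X Lam B : {fset T}) : F := Zpart X Lam B / Zpart fset0 Lam B.
End Defs.

Definition total_order_on (T : choiceType) (Y : {fset T}) (le : rel T) : Prop :=
  [/\ {in Y, reflexive le},
      {in Y &, antisymmetric le},
      {in Y & &, forall y1 y2 y3, le y1 y2 -> le y2 y3 -> le y1 y3}
    & {in Y &, total le}].

Definition strict_below (T : choiceType) (Y : {fset T}) (le : rel T) (y : T) : {fset T} :=
  [fset y' in Y | le y' y && (y' != y)].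

(* Main.v *)
Require Import Defs.
From HB Require Import structures.
From mathcomp Require Import all_boot all_order all_algebra.
From mathcomp Require Import finmap.
Set Implicit Arguments. Unset Strict Implicit. Unset Printing Implicit Defensive.
Import GRing.Theory.
Local Open Scope ring_scope.
Local Open Scope fset_scope.

Lemma big_fpowersetU (K : choiceType) (R : Type) (idx : R) (op : Monoid.com_law idx)
  (A X : {fset K}) (f : {fset K} -> R) :
  [disjoint A & X] ->
  \big[op/idx]_(S <- fpowerset (A `|` X)) f S =
  \big[op/idx]_(S1 <- fpowerset A) \big[op/idx]_(S2 <- fpowerset X) f (S1 `|` S2).
Proof.
move=> /fdisjointP dAX.
have -> : fpowerset (A `|` X) = [fset S1 `|` S2 | S1 in fpowerset A, S2 in fpowerset X].
  apply/fsetP => S; rewrite fpowersetE; apply/idP/imfset2P.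
    move=> SAX; exists (S `&` A).
  by rewrite /= fpowersetE fsubsetIr.
    exists (S `&` X); first by rewrite /= fpowersetE fsubsetIr.
    by rewrite -fsetIUr; apply/esym/fsetIidPl.
  move=> [S1]; rewrite /= fpowersetE => S1A [S2]; rewrite /= fpowersetE => S2X ->.
  exact: fsetUSS.
rewrite big_imfset2 /=; last first.

  move=> [S1 S2] [S1' S2']; rewrite !inE /= !fpowersetE => /andP[h1 h2] /andP[h1' h2'] /= E.
  have e1 : S1 = S1'.
    apply/fsetP => x; apply/idP/idP => hx.
      have : x \in S1 `|` S2 by rewrite inE hx.
      rewrite E inE => /orP[//|/(fsubsetP h2') xX].
      by move: (dAX x ((fsubsetP h1) x hx)); rewrite xX.
    have : x \in S1' `|` S2' by rewrite inE hx.
    rewrite -E inE => /orP[//|/(fsubsetP h2) xX].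
    by move: (dAX x ((fsubsetP h1') x hx)); rewrite xX.
  subst S1'.
  have e2 : S2 = S2'.
    apply/fsetP => x; apply/idP/idP => hx.
      have : x \in S1 `|` S2 by rewrite inE hx orbT.
      rewrite E inE => /orP[/(fsubsetP h1) xA|//].
      by move: (dAX x xA); rewrite ((fsubsetP h2) x hx).
    have : x \in S1 `|` S2' by rewrite inE hx orbT.
    rewrite -E inE => /orP[/(fsubsetP h1) xA|//].
    by move: (dAX x xA); rewrite ((fsubsetP h2') x hx).
  by rewrite e2.
done.
Qed.


Section Helpers.
Variables (T : countType) (F : fieldType) (z : T -> F) (W : {fset T} -> F).

Lemma zpowU (A X : {fset T}) : [disjoint A & X] ->
  zpow z (A `|` X) = zpow z A * zpow z X.
Proof.
move=> /fdisjointP dAX; rewrite /zpow (big_fsetID _ (mem A)) /=.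
congr (_ * _); apply: eq_fbigl => x; rewrite !inE /=.
  by case: (x \in A); rewrite ?andbF ?andbT.
case xA: (x \in A) => /=; last by rewrite andbT.
by rewrite (negbTE (dAX x xA)).
Qed.

Lemma kappa_mk (X B : {fset T}) :
  kappa W X B = \prod_(S <- fpowerset X) (if S != fset0 then Wcond W S B else 1).
Proof. by rewrite /kappa big_mkcond. Qed.

Lemma Wcond0 (S : {fset T}) : Wcond W S fset0 = W S.
Proof. by rewrite /Wcond fsetI0 eqxx fpowerset0 big_seq_fset1 fsetU0. Qed.

Lemma Wcond_disj (S A : {fset T}) : [disjoint S & A] ->
  Wcond W S A = \prod_(C <- fpowerset A) W (S `|` C).
Proof. by move=> h; rewrite /Wcond (_ : (S `&` A == fset0) = true). Qed.

Lemma kappa_zero (X B : {fset T}) (a : T) : a \in X -> a \in B -> kappa W X B = 0.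
Proof.
move=> aX aB; rewrite kappa_mk (big_fsetD1 [fset a]) /=; last first.
  by rewrite fpowersetE fsub1set.
have -> : ([fset a] != fset0) = true.
  by apply/fset0Pn; exists a; rewrite inE.
rewrite /Wcond.
have -> : ([fset a] `&` B == fset0) = false.
  by apply/negP => /eqP /fsetP /(_ a); rewrite !inE eqxx aB.
have -> : [exists y : [fset a], ([fset a] == [fset val y]) && (val y \in B)] = true.
  by apply/existsP; exists [` fset11 a]; rewrite /= eqxx aB.
by rewrite mul0r.
Qed.

Lemma kappaU (A X : {fset T}) : [disjoint A & X] ->
  kappa W (A `|` X) fset0 = kappa W A fset0 * kappa W X A.
Proof.
move=> dAX; rewrite !kappa_mk (big_fpowersetU _ _ dAX) exchange_big /=.
have h0 : forall Y : {fset T}, fset0 \in fpowerset Y by move=> Y; rewrite fpowersetE fsub0set.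
rewrite (big_fsetD1 fset0 (h0 X)) [in RHS](big_fsetD1 fset0 (h0 X)) eqxx /= mul1r.
congr (_ * _).
  by apply: eq_bigr => S1 _; rewrite fsetU0.
apply: eq_fbigr => S2; rewrite !inE fpowersetE => /andP[S2n0 S2X] _.
rewrite S2n0 Wcond_disj; last first.
  by rewrite fdisjoint_sym; apply: fdisjointWr S2X dAX.
apply: eq_bigr => S1 _.
have -> : (S1 `|` S2 != fset0) = true.
  by apply/negP; rewrite fsetU_eq0 => /andP[_ /eqP E]; move: S2n0; rewrite E eqxx.
by rewrite Wcond0 fsetUC.
Qed.

Lemma ZU (A X Lam : {fset T}) : [disjoint A & X] ->
  Zpart z W (A `|` X) Lam fset0 = zpow z A * kappa W A fset0 * Zpart z W X Lam A.
Proof.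
move=> dAX; rewrite /Zpart mulr_sumr.
rewrite -(@big_fset_incl _ _ _ _ (fpowerset (Lam `\` (A `|` X))) (fpowerset (Lam `\` X))); last first.
- move=> Y'; rewrite !fpowersetE => sub nsub.
  have [a aY aN] := fsubsetPn _ _ nsub.
  move: (fsubsetP sub a aY) aN; rewrite !inE negb_and negbK => /andP[aX aL].
  rewrite aL orbF (negbTE aX) orbF => aA.
  by rewrite (@kappa_zero (X `|` Y') A a) ?mulr0 // in_fsetU aY orbT.
- apply/fsubsetP => S; rewrite !fpowersetE => h; apply/fsubsetP => x /(fsubsetP h).
  by rewrite !inE negb_or => /andP[/andP[_ ->] ->].
apply: eq_fbigr => Y'; rewrite fpowersetE => hY _.
have dAXY : [disjoint A & (X `|` Y')].
  apply/fdisjointP => a aA; rewrite inE negb_or (fdisjointP dAX a aA) /=.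
  apply/negP => /(fsubsetP hY); by rewrite !inE aA /=.
by rewrite -fsetUA zpowU // kappaU // mulrACA.
Qed.

End Helpers.

Lemma total_sub (T : choiceType) (Y0 Y : {fset T}) (le : rel T) :
  Y0 `<=` Y -> total_order_on Y le -> total_order_on Y0 le.
Proof.
move=> /fsubsetP s [r a t to]; split.
- by move=> x /s; apply: r.
- by move=> x y /s hx /s hy; apply: a.
- by move=> x y w /s hx /s hy /s hw; apply: t.
- by move=> x y /s hx /s hy; apply: to.
Qed.

Lemma max_exists (T : choiceType) (le : rel T) (n : nat) (Y : {fset T}) :
  (#|`Y| <= n)%N -> Y != fset0 -> total_order_on Y le ->
  exists2 m, m \in Y & forall y, y \in Y -> le y m.
Proof.
elim: n Y => [|n IH] Y hc hn ho.
  by move: hc; rewrite leqn0 => /eqP /cardfs0_eq E; move: hn; rewrite E eqxx.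
have [x xY] := fset0Pn _ hn.
have [r a t to] := ho.
case: (eqVneq (Y `\ x) fset0) => [E|NE].
  exists x => // y yY; have : y \notin Y `\ x by rewrite E inE.
  by rewrite !inE yY andbT negbK => /eqP ->; apply: r.
have sub : Y `\ x `<=` Y by apply: fsubsetDl.
have hc' : (#|` Y `\ x| <= n)%N by move: hc; rewrite (cardfsD1 x Y) xY.
have [m mY' hm] := IH (Y `\ x) hc' NE (total_sub sub ho).
have mY := fsubsetP sub m mY'.
case/orP: (to x m xY mY) => hxm.
  exists m => // y yY; case: (eqVneq y x) => [->//|yx].
  by apply: hm; rewrite !inE yx yY.
exists x => // y yY; case: (eqVneq y x) => [->|yx]; first exact: r.
by apply: (t y m x yY mY xY) => //; apply: hm; rewrite !inE yx yY.
Qed.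

Lemma aux_div (F : fieldType) (a b c d : F) : b != 0 -> c * a / d = a / b * (c * b / d).
Proof. move=> hb. by rewrite -!mulrA [c * (b * _)]mulrCA mulKf // mulrCA. Qed.

Lemma main_gen (T : countType) (F : fieldType) (z : T -> F) (W : {fset T} -> F)
    (Lam : {fset T}) (le : rel T) (n : nat) : forall Y : {fset T}, (#|`Y| <= n)%N ->
  total_order_on Y le ->
  (forall y, y \in Y -> Zpart z W fset0 Lam (strict_below Y le y) != 0) ->
  Zpart z W fset0 Lam fset0 != 0 ->
  Rcorr z W Y Lam fset0 = \prod_(y <- Y) Rcorr z W [fset y] Lam (strict_below Y le y).
Proof.
elim: n => [|n IH] Y hc ho hZ hZ0.
  move: hc; rewrite leqn0 => /eqP /cardfs0_eq ->.
  by rewrite big_seq_fset0 /Rcorr divff.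
case: (eqVneq Y fset0) => [->|hn].
  by rewrite big_seq_fset0 /Rcorr divff.
have [m mY hm] := max_exists (leqnn _) hn ho.
have [r a t to] := ho.
set Y0 := Y `\ m.
have sub : Y0 `<=` Y by apply: fsubsetDl.
have hc' : (#|` Y0| <= n)%N by move: hc; rewrite (cardfsD1 m Y) mY.
have sbY0 : forall y, y \in Y0 -> strict_below Y0 le y = strict_below Y le y.
  move=> y yY0; apply/fsetP => y'; rewrite !inE /=.
  case: (eqVneq y' m) => [->|//] /=.
  have yY := fsubsetP sub y yY0.
  have ym : y != m by move: yY0; rewrite !inE => /andP[].
  have nle : ~~ le m y.
    by apply/negP => hmy; move: ym; rewrite (a m y mY yY) ?eqxx // hmy hm.
  by rewrite (negbTE nle) /= andbF.
have sbm : strict_below Y le m = Y0.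
  apply/fsetP => y'; rewrite !inE /=.
  case y'Y : (y' \in Y); rewrite ?andbF //= andbT.
  by rewrite hm.
have IH0 := IH Y0 hc' (total_sub sub ho).
have IHY0 : Rcorr z W Y0 Lam fset0 =
    \prod_(y <- Y0) Rcorr z W [fset y] Lam (strict_below Y le y).
  rewrite IH0 //; last first.
    by move=> y yY0; rewrite sbY0 //; apply: hZ; apply: (fsubsetP sub).
  by apply: eq_fbigr => y yY0 _; rewrite sbY0.
rewrite (big_fsetD1 m mY) /= sbm.
have EY : Y = Y0 `|` [fset m].
  apply/fsetP => y; rewrite !inE; case: (eqVneq y m) => [->|]; by rewrite ?mY ?orbT ?orbF.
have dY0 : [disjoint Y0 & [fset m]].
  by apply/fdisjointP => y; rewrite !inE => /andP[ym _].
have dY00 : [disjoint Y0 & fset0] by apply/fdisjointP => y; rewrite !inE.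
have ZY : Zpart z W Y Lam fset0 = zpow z Y0 * kappa W Y0 fset0 * Zpart z W [fset m] Lam Y0.
  by rewrite -ZU // -EY.
have ZY0 : Zpart z W Y0 Lam fset0 = zpow z Y0 * kappa W Y0 fset0 * Zpart z W fset0 Lam Y0.
  by rewrite -ZU // fsetU0.
have hm0 : Zpart z W fset0 Lam Y0 != 0 by rewrite -sbm; apply: hZ.
rewrite -IHY0.
rewrite /Rcorr ZY ZY0.
exact: aux_div.
Qed.

Unset Implicit Arguments.
Set Strict Implicit.

Theorem lemma4p4 (T : countType) (F : fieldType) (z : T -> F) (W : {fset T} -> F)
    (Lam Y : {fset T}) (le : rel T) :
  total_order_on Y le ->
  (forall y, y \in Y -> Zpart z W fset0 Lam (strict_below Y le y) != 0) ->
  Zpart z W fset0 Lam fset0 != 0 ->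
  Rcorr z W Y Lam fset0 = \prod_(y <- Y) Rcorr z W [fset y] Lam (strict_below Y le y).
Proof. exact: (main_gen (leqnn _)). Qed.
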